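(* Let $d>0$, $r_C>0$, and let $\mathcal{C}=\{(x,y,r_C): |x|\le d,\ |y|\le d\}$ be the square of half-width $d$ centered at $(0,0,r_C)$ in the plane $z=r_C$, with unit normal $\mathbf{e}_z$. Let $l\ge1$ and $-l\le m\le l$ be integers. If $m$ is not a multiple of $4$ (i.e. $m$ is odd, or $m=2k$ with $k$ odd), then $$v_{lm}:=\int_{\mathcal{C}}\frac{\boldsymbol{\nu}_{lm}(\theta,\phi)}{R^{l+2}}\cdot\mathbf{e}_z\,dS=0.$$
   Context: $(R,\theta,\phi)$ are spherical coordinates of $(x,y,r_C)$: $R=\sqrt{x^2+y^2+r_C^2}$, $\theta=\arccos(r_C/R)$, $\phi$ the azimuthal angle of $(x,y)$; $\mathbf{e}_R,\mathbf{e}_\theta,\mathbf{e}_\phi$ the spherical orthonormal frame. $Y_{lm}(\theta,\phi)=\sqrt{\frac{2l+1}{4\pi}\frac{(l-m)!}{(l+m)!}}\,e^{im\phi}P_l^m(\cos\theta)$ with $P_l^m(x)=\frac{(-1)^m}{2^l l!}(1-x^2)^{m/2}\frac{d^{m+l}}{dx^{m+l}}(x^2-1)^l$, and $\boldsymbol{\nu}_{lm}=-(l+1)Y_{lm}\mathbf{e}_R+\frac{\partial Y_{lm}}{\partial\theta}\mathbf{e}_\theta+\frac{imY_{lm}}{\sin\theta}\mathbf{e}_\phi$. *)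

(* Defs.v *)
From Stdlib Require Import Reals ZArith Lra.
From Coquelicot Require Import Coquelicot.
Open Scope R_scope.

(* Azimuthal angle of (x,y) in (-PI, PI]; value 0 at the origin (irrelevant, measure zero). *)
Definition azimuth (x y : R) : R :=
  if Rlt_dec 0 x then atan (y / x)
  else if Rlt_dec x 0 then
    (if Rle_dec 0 y then atan (y / x) + PI else atan (y / x) - PI)
  else if Rlt_dec 0 y then PI / 2
  else if Rlt_dec y 0 then - (PI / 2)
  else 0.

Definition sphR (rC x y : R) : R := sqrt (x ^ 2 + y ^ 2 + rC ^ 2).
Definition sphTheta (rC x y : R) : R := acos (rC / sphR rC x y).
Definition sphPhi (x y : R) : R := azimuth x y.

(* Associated Legendre function, Rodrigues formula:
   P_l^m(t) = (-1)^m / (2^l l!) (1-t^2)^{m/2} d^{m+l}/dt^{m+l} (t^2-1)^l,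
   for integers -l <= m <= l; (1-t^2)^{m/2} is written sqrt(1-t^2)^m (Z-power). *)
Definition assocLegendre (l : nat) (m : Z) (t : R) : R :=
  (-1) ^ (Z.abs_nat m) / (2 ^ l * INR (Factorial.fact l))
  * powerRZ (sqrt (1 - t ^ 2)) m
  * Derive_n (fun s => (s ^ 2 - 1) ^ l) (Z.to_nat (Z.of_nat l + m)) t.

Definition Ynorm (l : nat) (m : Z) : R :=
  sqrt ((2 * INR l + 1) / (4 * PI)
        * INR (Factorial.fact (Z.to_nat (Z.of_nat l - m)))
        / INR (Factorial.fact (Z.to_nat (Z.of_nat l + m)))).

Definition Y_re (l : nat) (m : Z) (th ph : R) : R :=
  Ynorm l m * cos (IZR m * ph) * assocLegendre l m (cos th).
Definition Y_im (l : nat) (m : Z) (th ph : R) : R :=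
  Ynorm l m * sin (IZR m * ph) * assocLegendre l m (cos th).
Definition Ylm (l : nat) (m : Z) (th ph : R) : C := (Y_re l m th ph, Y_im l m th ph).

Definition dYlm_dtheta (l : nat) (m : Z) (th ph : R) : C :=
  (Derive (fun t => Y_re l m t ph) th, Derive (fun t => Y_im l m t ph) th).

Definition e_R (th ph : R) : R * R * R := (sin th * cos ph, sin th * sin ph, cos th).
Definition e_theta (th ph : R) : R * R * R := (cos th * cos ph, cos th * sin ph, - sin th).
Definition e_phi (th ph : R) : R * R * R := (- sin ph, cos ph, 0).

Definition cscal (c : C) (v : R * R * R) : C * C * C :=
  let '(a, b, e) := v in (Cmult c (RtoC a), Cmult c (RtoC b), Cmult c (RtoC e)).
Definition cadd3 (u v : C * C * C) : C * C * C :=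
  let '(a, b, e) := u in let '(a', b', e') := v in (Cplus a a', Cplus b b', Cplus e e').

Definition nu_lm (l : nat) (m : Z) (th ph : R) : C * C * C :=
  cadd3 (cscal (Cmult (RtoC (- (INR l + 1))) (Ylm l m th ph)) (e_R th ph))
   (cadd3 (cscal (dYlm_dtheta l m th ph) (e_theta th ph))
          (cscal (Cmult (Cmult (0, 1) (RtoC (IZR m)))
                  (Cmult (Ylm l m th ph) (RtoC (/ sin th)))) (e_phi th ph))).

Definition dot_ez (v : C * C * C) : C := let '(_, _, c) := v in c.

(* v_lm = \int_C nu_lm(theta,phi)/R^{l+2} . e_z dS, the square C parametrised by
   (x,y) in [-d,d]^2 (dS = dx dy), written as an iterated Riemann integral of a
   C-valued function. *)
Definition v_lm (d rC : R) (l : nat) (m : Z) : C :=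
  RInt (V := C_R_CompleteNormedModule)
    (fun x => RInt (V := C_R_CompleteNormedModule)
       (fun y => Cmult (RtoC (/ (sphR rC x y) ^ (l + 2)))
                   (dot_ez (nu_lm l m (sphTheta rC x y) (sphPhi x y))))
       (- d) d)
    (- d) d.

(* Main.v *)
Require Import Defs.
From Stdlib Require Import Reals ZArith.
From Coquelicot Require Import Coquelicot.
Open Scope R_scope.
From Stdlib Require Import Reals ZArith Lra Lia List.
From Coquelicot Require Import Coquelicot.
Open Scope R_scope.
Require Import Defs.
From Stdlib Require Import Reals ZArith Lra Lia List.
From Coquelicot Require Import Coquelicot.
Open Scope R_scope.
From Stdlib Require Import Reals ZArith Lra Lia List.
From Coquelicot Require Import Coquelicot.
Open Scope R_scope.

Lemma isd_const (c u : R) : is_derive (fun _ => c) u 0.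
Proof. apply is_derive_Reals, derivable_pt_lim_const. Qed.
Lemma isd_id (u : R) : is_derive (fun x => x) u 1.
Proof. apply is_derive_Reals, derivable_pt_lim_id. Qed.
Lemma isd_plus (f g : R -> R) (u df dg : R) : is_derive f u df -> is_derive g u dg ->
  is_derive (fun x => f x + g x) u (df + dg).
Proof. rewrite !is_derive_Reals. intros; apply derivable_pt_lim_plus; auto. Qed.
Lemma isd_minus (f g : R -> R) (u df dg : R) : is_derive f u df -> is_derive g u dg ->
  is_derive (fun x => f x - g x) u (df - dg).
Proof. rewrite !is_derive_Reals. intros; apply derivable_pt_lim_minus; auto. Qed.
Lemma isd_mult (f g : R -> R) (u df dg : R) : is_derive f u df -> is_derive g u dg ->
  is_derive (fun x => f x * g x) u (df * g u + f u * dg).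
Proof. rewrite !is_derive_Reals. intros; apply derivable_pt_lim_mult; auto. Qed.
Lemma isd_comp (f g : R -> R) (u df dg : R) : is_derive g u dg -> is_derive f (g u) df ->
  is_derive (fun x => f (g x)) u (df * dg).
Proof. rewrite !is_derive_Reals. intros. apply (derivable_pt_lim_comp g f); auto. Qed.
Lemma isd_pow (f : R -> R) (n : nat) (u df : R) : is_derive f u df ->
  is_derive (fun x => f x ^ n) u (INR n * f u ^ (pred n) * df).
Proof.
  intros H. apply (isd_comp (fun x => x ^ n) f u). auto.
  apply is_derive_Reals, derivable_pt_lim_pow.
Qed.
Lemma isd_inv (f : R -> R) (u df : R) : is_derive f u df -> f u <> 0 ->
  is_derive (fun x => / f x) u (- df / (f u)^2).
Proof. intros H Hf. apply (is_derive_inv f u df); auto. Qed.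
Lemma isd_ext (f g : R -> R) (u df : R) : (forall x, f x = g x) -> is_derive f u df -> is_derive g u df.
Proof. intros E H. apply (is_derive_ext f g); auto. Qed.
Lemma isd_sin u : is_derive sin u (cos u).
Proof. apply is_derive_Reals, derivable_pt_lim_sin. Qed.
Lemma isd_cos u : is_derive cos u (- sin u).
Proof. apply is_derive_Reals, derivable_pt_lim_cos. Qed.

Fixpoint peval (p : list R) (u : R) : R :=
  match p with nil => 0 | a :: q => a + u * peval q u end.
Fixpoint padd (p q : list R) : list R :=
  match p, q with
  | nil, _ => q
  | _, nil => p
  | a :: p', b :: q' => (a + b) :: padd p' q'
  end.
Definition pscal (c : R) (p : list R) := map (Rmult c) p.
Fixpoint pmul (p q : list R) : list R :=
  match p with nil => nil | a :: p' => padd (pscal a q) (0 :: pmul p' q) end.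
Fixpoint pder (p : list R) : list R :=
  match p with nil => nil | a :: q => padd q (0 :: pder q) end.
Fixpoint ppow (p : list R) (n : nat) : list R :=
  match n with O => 1 :: nil | S n => pmul p (ppow p n) end.

Lemma peval_add p q u : peval (padd p q) u = peval p u + peval q u.
Proof.
  revert q; induction p as [|a p IH]; intros [|b q]; simpl; try ring.
  rewrite IH; ring.
Qed.
Lemma peval_scal c p u : peval (pscal c p) u = c * peval p u.
Proof. induction p as [|a p IH]; simpl; [ring| rewrite IH; ring]. Qed.
Lemma peval_mul p q u : peval (pmul p q) u = peval p u * peval q u.
Proof.
  induction p as [|a p IH]; simpl; [ring|].
  rewrite peval_add, peval_scal; simpl; rewrite IH; ring.
Qed.
Lemma peval_pow p n u : peval (ppow p n) u = (peval p u) ^ n.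
Proof. induction n; simpl; [ring| rewrite peval_mul, IHn; ring]. Qed.
Lemma peval_der p u : is_derive (peval p) u (peval (pder p) u).
Proof.
  induction p as [|a p IH]; simpl.
  - apply isd_const.
  - rewrite peval_add; simpl.
    apply (isd_ext (fun u => a + u * peval p u)). reflexivity.
    replace (peval p u + (0 + u * peval (pder p) u)) with
      (0 + (1 * peval p u + u * peval (pder p) u)) by ring.
    apply isd_plus. apply isd_const.
    apply (isd_mult (fun u => u) (peval p)); auto. apply isd_id.
Qed.
Lemma peval_cont p u : continuous (peval p) u.
Proof. apply (ex_derive_continuous (K := R_AbsRing) (V := R_NormedModule)). eexists; apply peval_der. Qed.

Definition Fleg (l : nat) := fun s : R => (s ^ 2 - 1) ^ l.

Lemma DnF_poly l j : exists q, forall u, Derive_n (Fleg l) j u = peval q u.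
Proof.
  induction j as [|j [q Hq]].
  - exists (ppow (-1 :: 0 :: 1 :: nil) l). intros u. simpl. rewrite peval_pow.
    unfold Fleg. simpl. f_equal. ring.
  - exists (pder q). intros u. simpl.
    rewrite (Derive_ext _ (peval q)) by auto.
    apply is_derive_unique, peval_der.
Qed.

Lemma DnF_fact l j : (j <= l)%nat ->
  exists H, forall u, Derive_n (Fleg l) j u = (u - 1) ^ (l - j) * peval H u.
Proof.
  induction j as [|j IH]; intros Hj.
  - exists (ppow (1 :: 1 :: nil) l). intros u. simpl. rewrite peval_pow.
    unfold Fleg. rewrite Nat.sub_0_r, <- Rpow_mult_distr. f_equal. simpl. ring.
  - destruct IH as [H HH]. lia.
    destruct (l - j)%nat as [|a'] eqn:E. lia.
    replace (l - S j)%nat with a' by lia.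
    exists (padd (pscal (INR (S a')) H) (pmul (-1 :: 1 :: nil) (pder H))).
    intros u. simpl Derive_n.
    rewrite (Derive_ext _ (fun u => (u - 1) ^ S a' * peval H u)) by auto.
    apply is_derive_unique.
    rewrite peval_add, peval_scal, peval_mul.
    apply (isd_ext (fun u => (u - 1) ^ S a' * peval H u)). reflexivity.
    replace ((u - 1) ^ a' * (INR (S a') * peval H u + peval (-1 :: 1 :: nil) u * peval (pder H) u))
      with ((INR (S a') * 1 * (u - 1) ^ a') * peval H u + (u - 1) ^ S a' * peval (pder H) u)
      by (simpl; ring).
    apply (isd_mult (fun u => (u - 1) ^ S a') (peval H)).
    + replace (INR (S a') * 1 * (u - 1) ^ a') with (INR (S a') * (u - 1) ^ (pred (S a')) * 1) by (simpl; ring).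
      apply (isd_pow (fun u => u - 1) (S a') u 1).
      assert (Hd1 : is_derive (fun u => u - 1) u (1 - 0)) by (apply isd_minus; [apply isd_id|apply isd_const]).
      rewrite Rminus_0_r in Hd1. exact Hd1.
    + apply peval_der.
Qed.

Definition Kc (l : nat) (m : Z) := (-1) ^ (Z.abs_nat m) / (2 ^ l * INR (Factorial.fact l)).
Definition Qf (l : nat) (m : Z) := Derive_n (Fleg l) (Z.to_nat (Z.of_nat l + m)).

Lemma assoc_eq l m t : assocLegendre l m t = Kc l m * powerRZ (sqrt (1 - t ^ 2)) m * Qf l m t.
Proof. reflexivity. Qed.

Lemma sqrt_sin t : 0 < t < PI -> sqrt (1 - cos t ^ 2) = sin t.
Proof.
  intros Ht. assert (0 < sin t) by (apply sin_gt_0; lra).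
  rewrite <- (sqrt_pow2 (sin t)) by lra. f_equal.
  pose proof (sin2_cos2 t). unfold Rsqr in H0. simpl. nra.
Qed.

Lemma Derive_loc_pi (f g : R -> R) th : 0 < th < PI ->
  (forall t, 0 < t < PI -> f t = g t) -> Derive f th = Derive g th.
Proof.
  intros Hth H. apply Derive_ext_loc.
  assert (Hp : 0 < Rmin th (PI - th)) by (apply Rmin_pos; lra).
  exists (mkposreal _ Hp). intros t Ht. apply H.
  unfold ball in Ht; simpl in Ht; unfold AbsRing_ball, abs, minus, plus, opp in Ht; simpl in Ht.
  apply Rabs_lt_between' in Ht. pose proof (Rmin_l th (PI - th)). pose proof (Rmin_r th (PI - th)). lra.
Qed.

Lemma Qf_der l m u : is_derive (Qf l m) u (Derive_n (Fleg l) (S (Z.to_nat (Z.of_nat l + m))) u).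
Proof.
  unfold Qf. destruct (DnF_poly l (Z.to_nat (Z.of_nat l + m))) as [q Hq].
  simpl. rewrite (Derive_ext _ (peval q)) by auto.
  apply (isd_ext (peval q)). intros; rewrite Hq; auto.
  rewrite (is_derive_unique _ _ _ (peval_der q u)). apply peval_der.
Qed.

Lemma deriv_pos l (k : nat) th : 0 < th < PI ->
  Derive (fun t => assocLegendre l (Z.of_nat k) (cos t)) th =
  Kc l (Z.of_nat k) * (INR k * sin th ^ (pred k) * cos th * Qf l (Z.of_nat k) (cos th) +
       sin th ^ k * (Derive_n (Fleg l) (S (Z.to_nat (Z.of_nat l + Z.of_nat k))) (cos th) * - sin th)).
Proof.
  intros Hth.
  rewrite (Derive_loc_pi _ (fun t => Kc l (Z.of_nat k) * (sin t ^ k * Qf l (Z.of_nat k) (cos t)))); auto.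
  2: { intros t Ht; rewrite assoc_eq, sqrt_sin, <- pow_powerRZ by auto; ring. }
  apply is_derive_unique.
  replace (Kc l (Z.of_nat k) * _) with (0 * (sin th ^ k * Qf l (Z.of_nat k) (cos th)) + Kc l (Z.of_nat k) *
     ((INR k * sin th ^ pred k * cos th) * Qf l (Z.of_nat k) (cos th) +
       sin th ^ k * (Derive_n (Fleg l) (S (Z.to_nat (Z.of_nat l + Z.of_nat k))) (cos th) * - sin th))) by ring.
  apply (isd_mult (fun _ => Kc l (Z.of_nat k)) (fun t => sin t ^ k * Qf l (Z.of_nat k) (cos t))). apply isd_const.
  apply (isd_mult (fun t => sin t ^ k) (fun t => Qf l (Z.of_nat k) (cos t))).
  replace (INR k * sin th ^ Init.Nat.pred k * cos th) with (INR k * sin th ^ Init.Nat.pred k * cos th) by ring.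
  apply (isd_pow sin). apply isd_sin.
  apply (isd_comp (Qf l (Z.of_nat k)) cos). apply isd_cos. apply Qf_der.
Qed.

Lemma deriv_neg l (k : nat) th : 0 < th < PI ->
  Derive (fun t => assocLegendre l (- Z.of_nat k) (cos t)) th =
  Kc l (- Z.of_nat k) * (- (INR k * sin th ^ (pred k) * cos th) / (sin th ^ k) ^ 2 * Qf l (- Z.of_nat k) (cos th) +
       / sin th ^ k * (Derive_n (Fleg l) (S (Z.to_nat (Z.of_nat l + - Z.of_nat k))) (cos th) * - sin th)).
Proof.
  intros Hth.
  assert (Hs : forall t, 0 < t < PI -> sin t ^ k <> 0).
  { intros t Ht. apply pow_nonzero. apply Rgt_not_eq, sin_gt_0; lra. }
  rewrite (Derive_loc_pi _ (fun t => Kc l (- Z.of_nat k) * (/ sin t ^ k * Qf l (- Z.of_nat k) (cos t)))); auto.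
  2: { intros t Ht; rewrite assoc_eq, sqrt_sin by auto.
       rewrite powerRZ_neg', <- pow_powerRZ. ring. }
  apply is_derive_unique.
  replace (Kc l (- Z.of_nat k) * _) with (0 * (/ sin th ^ k * Qf l (- Z.of_nat k) (cos th)) + Kc l (- Z.of_nat k) *
     ((- (INR k * sin th ^ pred k * cos th) / (sin th ^ k) ^ 2) * Qf l (- Z.of_nat k) (cos th) +
       / sin th ^ k * (Derive_n (Fleg l) (S (Z.to_nat (Z.of_nat l + - Z.of_nat k))) (cos th) * - sin th))) by ring.
  apply (isd_mult (fun _ => Kc l (- Z.of_nat k)) (fun t => / sin t ^ k * Qf l (- Z.of_nat k) (cos t))). apply isd_const.
  apply (isd_mult (fun t => / sin t ^ k) (fun t => Qf l (- Z.of_nat k) (cos t))).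
  apply (isd_inv (fun t => sin t ^ k)). apply (isd_pow sin). apply isd_sin. apply Hs; auto.
  apply (isd_comp (Qf l (- Z.of_nat k)) cos). apply isd_cos. apply Qf_der.
Qed.
From Stdlib Require Import Reals ZArith Lra Lia List.
From Coquelicot Require Import Coquelicot.
Open Scope R_scope.
Require Import Defs.

Fixpoint Tcs (n : nat) (c s : R) : R * R :=
  match n with
  | O => (1, 0)
  | S n => (c * fst (Tcs n c s) - s * snd (Tcs n c s), s * fst (Tcs n c s) + c * snd (Tcs n c s))
  end.

Lemma deMoivre n a : cos (INR n * a) = fst (Tcs n (cos a) (sin a)) /\
                     sin (INR n * a) = snd (Tcs n (cos a) (sin a)).
Proof.
  induction n as [|n [IH1 IH2]].
  - simpl. rewrite Rmult_0_l, cos_0, sin_0. auto.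
  - simpl fst; simpl snd. rewrite S_INR.
    replace ((INR n + 1) * a) with (a + INR n * a) by ring.
    rewrite cos_plus, sin_plus, IH1, IH2. split; ring.
Qed.

Lemma Tcs_hom n l c s : fst (Tcs n (l * c) (l * s)) = l ^ n * fst (Tcs n c s) /\
                        snd (Tcs n (l * c) (l * s)) = l ^ n * snd (Tcs n c s).
Proof.
  induction n as [|n [IH1 IH2]]; simpl.
  - split; ring.
  - rewrite IH1, IH2. split; ring.
Qed.

Lemma Tcs_00 n : (1 <= n)%nat -> fst (Tcs n 0 0) = 0 /\ snd (Tcs n 0 0) = 0.
Proof. intros H. destruct n. lia. simpl. split; ring. Qed.

Lemma Tcs_cont n x y : continuity_2d_pt (fun u v => fst (Tcs n u v)) x y /\
                       continuity_2d_pt (fun u v => snd (Tcs n u v)) x y.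
Proof.
  induction n as [|n [IH1 IH2]]; simpl.
  - split; apply continuity_2d_pt_const.
  - split.
    + apply continuity_2d_pt_minus; apply continuity_2d_pt_mult; auto.
      apply continuity_2d_pt_id1. apply continuity_2d_pt_id2.
    + apply continuity_2d_pt_plus; apply continuity_2d_pt_mult; auto.
      apply continuity_2d_pt_id2. apply continuity_2d_pt_id1.
Qed.

Lemma same_angle (m : Z) a b : cos a = cos b -> sin a = sin b ->
  cos (IZR m * a) = cos (IZR m * b) /\ sin (IZR m * a) = sin (IZR m * b).
Proof.
  intros Hc Hs.
  assert (N : forall n : nat, cos (INR n * a) = cos (INR n * b) /\ sin (INR n * a) = sin (INR n * b)).
  { intros n. destruct (deMoivre n a) as [A1 A2]. destruct (deMoivre n b) as [B1 B2].
    rewrite A1, A2, B1, B2, Hc, Hs. auto. }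
  destruct m as [|p|p].
  - simpl. rewrite !Rmult_0_l. auto.
  - rewrite <- positive_nat_Z, <- INR_IZR_INZ. apply N.
  - replace (IZR (Z.neg p)) with (- INR (Pos.to_nat p)).
    rewrite !Ropp_mult_distr_l_reverse, !cos_neg, !sin_neg.
    destruct (N (Pos.to_nat p)) as [N1 N2]. rewrite N1, N2; auto.
    rewrite <- Pos2Z.opp_pos, opp_IZR, <- positive_nat_Z, <- INR_IZR_INZ. reflexivity.
Qed.

Lemma sqrt_1_div x y : x <> 0 -> sqrt (1 + (y / x)²) = sqrt (x ^ 2 + y ^ 2) / Rabs x.
Proof.
  intros Hx.
  assert (Ha : 0 < Rabs x) by (apply Rabs_pos_lt; auto).
  assert (Hp : 0 <= x ^ 2 + y ^ 2) by nra.
  rewrite <- (sqrt_pow2 (sqrt (x ^ 2 + y ^ 2) / Rabs x)).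
  f_equal. unfold Rdiv. rewrite Rpow_mult_distr, pow2_sqrt by auto.
  rewrite pow_inv, pow2_abs. unfold Rsqr. field. auto.
  apply Rmult_le_pos. apply sqrt_pos. left; apply Rinv_0_lt_compat; auto.
Qed.

Lemma azimuth_cs x y : (x <> 0 \/ y <> 0) ->
  cos (azimuth x y) = x / sqrt (x ^ 2 + y ^ 2) /\
  sin (azimuth x y) = y / sqrt (x ^ 2 + y ^ 2).
Proof.
  intros Hxy.
  assert (Hp : 0 < x ^ 2 + y ^ 2) by (destruct Hxy; nra).
  assert (Hr : 0 < sqrt (x ^ 2 + y ^ 2)) by (apply sqrt_lt_R0; auto).
  assert (AT : x <> 0 -> cos (atan (y / x)) = Rabs x / sqrt (x ^ 2 + y ^ 2) /\
                          sin (atan (y / x)) = y / x * Rabs x / sqrt (x ^ 2 + y ^ 2)).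
  { intros Hx. rewrite cos_atan, sin_atan, sqrt_1_div by auto.
    assert (0 < Rabs x) by (apply Rabs_pos_lt; auto).
    split; field; split; lra. }
  unfold azimuth.
  destruct (Rlt_dec 0 x) as [H1|H1].
  - destruct (AT (Rgt_not_eq _ _ H1)) as [A1 A2]. rewrite A1, A2, Rabs_right by lra.
    split; [reflexivity| field; split; lra].
  - destruct (Rlt_dec x 0) as [H2|H2].
    + destruct (AT (Rlt_not_eq _ _ H2)) as [A1 A2]. rewrite Rabs_left in A1, A2 by lra.
      destruct (Rle_dec 0 y).
      * rewrite cos_plus, sin_plus, cos_PI, sin_PI, A1, A2. split; field; split; lra.
      * rewrite cos_minus, sin_minus, cos_PI, sin_PI, A1, A2. split; field; split; lra.
    + assert (x = 0) by lra. subst x.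
      assert (Hy : y <> 0) by (destruct Hxy; lra).
      replace (0 ^ 2 + y ^ 2) with (y ^ 2) by ring.
      rewrite <- pow2_abs, sqrt_pow2 by apply Rabs_pos.
      destruct (Rlt_dec 0 y) as [H3|H3].
      * rewrite cos_PI2, sin_PI2, Rabs_right by lra. split; field; lra.
      * destruct (Rlt_dec y 0) as [H4|H4]; [|lra].
        rewrite cos_neg, sin_neg, cos_PI2, sin_PI2, Rabs_left by lra. split; field; lra.
Qed.

Lemma rot_angle (m : Z) x y : (x <> 0 \/ y <> 0) ->
  cos (IZR m * azimuth (- y) x) =
    cos (IZR m * azimuth x y) * cos (IZR m * (PI / 2)) - sin (IZR m * azimuth x y) * sin (IZR m * (PI / 2)) /\
  sin (IZR m * azimuth (- y) x) =
    sin (IZR m * azimuth x y) * cos (IZR m * (PI / 2)) + cos (IZR m * azimuth x y) * sin (IZR m * (PI / 2)).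
Proof.
  intros Hxy.
  assert (Hxy' : - y <> 0 \/ x <> 0) by (destruct Hxy; [right|left]; lra).
  destruct (azimuth_cs x y Hxy) as [C1 S1].
  destruct (azimuth_cs (- y) x Hxy') as [C2 S2].
  replace ((- y) ^ 2 + x ^ 2) with (x ^ 2 + y ^ 2) in C2, S2 by ring.
  destruct (same_angle m (azimuth (- y) x) (azimuth x y + PI / 2)) as [E1 E2].
  - rewrite C2, cos_plus, cos_PI2, sin_PI2, S1. field.
    apply Rgt_not_eq, sqrt_lt_R0. destruct Hxy; nra.
  - rewrite S2, sin_plus, cos_PI2, sin_PI2, C1. field.
    apply Rgt_not_eq, sqrt_lt_R0. destruct Hxy; nra.
  - rewrite E1, E2, Rmult_plus_distr_l, cos_plus, sin_plus. split; ring.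
Qed.

Lemma cos_Zper x q : cos (x + IZR q * (2 * PI)) = cos x.
Proof.
  destruct q as [|p|p].
  - rewrite Rmult_0_l, Rplus_0_r. reflexivity.
  - rewrite <- positive_nat_Z, <- INR_IZR_INZ.
    replace (x + INR (Pos.to_nat p) * (2 * PI)) with (x + 2 * INR (Pos.to_nat p) * PI) by ring.
    apply cos_period.
  - rewrite <- Pos2Z.opp_pos, opp_IZR, <- positive_nat_Z, <- INR_IZR_INZ.
    rewrite <- (cos_period (x + - INR (Pos.to_nat p) * (2 * PI)) (Pos.to_nat p)).
    f_equal. ring.
Qed.

Lemma cosA_ne1 (m : Z) : ~ (4 | m)%Z -> cos (IZR m * (PI / 2)) <> 1.
Proof.
  intros H4.
  pose proof (Z.div_mod m 4 ltac:(lia)) as Em.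
  pose proof (Z.mod_pos_bound m 4 ltac:(lia)) as Br.
  set (q := (m / 4)%Z) in *. set (r := (m mod 4)%Z) in *.
  assert (Er : IZR m * (PI / 2) = IZR r * (PI / 2) + IZR q * (2 * PI)).
  { rewrite Em, plus_IZR, mult_IZR. simpl. field. }
  rewrite Er, cos_Zper.
  assert (r <> 0%Z). { intros Hr. apply H4. exists q. lia. }
  assert (r = 1 \/ r = 2 \/ r = 3)%Z as [R|[R|R]] by lia; rewrite R.
  - simpl. rewrite Rmult_1_l, cos_PI2. lra.
  - replace (IZR 2 * (PI / 2)) with PI by (simpl; field). rewrite cos_PI. lra.
  - replace (IZR 3 * (PI / 2)) with (PI / 2 + PI) by (simpl; field).
    rewrite cos_plus, cos_PI2, sin_PI2, cos_PI, sin_PI. lra.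
Qed.

Definition integrand rC l m x y : C :=
  Cmult (RtoC (/ (sphR rC x y) ^ (l + 2))) (dot_ez (nu_lm l m (sphTheta rC x y) (sphPhi x y))).

Definition Wf rC l m x y :=
  / sphR rC x y ^ (l + 2) * Ynorm l m *
  (- (INR l + 1) * assocLegendre l m (cos (sphTheta rC x y)) * cos (sphTheta rC x y)
   - Derive (fun t => assocLegendre l m (cos t)) (sphTheta rC x y) * sin (sphTheta rC x y)).

Lemma integrand_parts rC l m x y :
  fst (integrand rC l m x y) = Wf rC l m x y * cos (IZR m * sphPhi x y) /\
  snd (integrand rC l m x y) = Wf rC l m x y * sin (IZR m * sphPhi x y).
Proof.
  unfold integrand, Wf, nu_lm, dot_ez, cadd3, cscal, e_R, e_theta, e_phi, Ylm, dYlm_dtheta, Y_re, Y_im. simpl.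
  rewrite !Derive_scal. split; ring.
Qed.

Lemma sphR_rot rC x y : sphR rC (- y) x = sphR rC x y.
Proof. unfold sphR. f_equal. ring. Qed.

Lemma Wf_rot rC l m x y : Wf rC l m (- y) x = Wf rC l m x y.
Proof. unfold Wf, sphTheta. rewrite sphR_rot. reflexivity. Qed.

Lemma Wf_0 rC l m : 0 < rC -> m <> 0%Z -> Wf rC l m 0 0 = 0.
Proof.
  intros HrC Hm.
  assert (E : sphTheta rC 0 0 = 0).
  { unfold sphTheta, sphR. replace (0 ^ 2 + 0 ^ 2 + rC ^ 2) with (rC ^ 2) by ring.
    rewrite sqrt_pow2 by lra. rewrite Rdiv_diag by lra. apply acos_1. }
  unfold Wf. rewrite E, cos_0, sin_0, assoc_eq.
  replace (1 - 1 ^ 2) with 0 by ring. rewrite sqrt_0.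
  assert (P0 : powerRZ 0 m = 0).
  { destruct m as [|p|p]. lia. simpl. apply pow_i. lia.
    simpl. rewrite pow_i by lia. apply Rinv_0. }
  rewrite P0. ring.
Qed.

Lemma geom rC x y : 0 < rC -> (x <> 0 \/ y <> 0) ->
  let R := sphR rC x y in let c := rC / R in let rho := sqrt (x ^ 2 + y ^ 2) in
  0 < R /\ 0 < c < 1 /\ 0 < rho /\
  cos (sphTheta rC x y) = c /\ sin (sphTheta rC x y) = rho / R /\
  0 < sphTheta rC x y < PI /\ (rho / R) ^ 2 = 1 - c ^ 2.
Proof.
  intros HrC Hxy R c rho.
  assert (Hp : 0 < x ^ 2 + y ^ 2) by (destruct Hxy; nra).
  assert (Hrho : 0 < rho) by (apply sqrt_lt_R0; auto).
  assert (HR2 : R ^ 2 = x ^ 2 + y ^ 2 + rC ^ 2) by (unfold R, sphR; rewrite pow2_sqrt; nra).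
  assert (HR : 0 < R) by (unfold R, sphR; apply sqrt_lt_R0; nra).
  assert (Hrho2 : rho ^ 2 = x ^ 2 + y ^ 2) by (unfold rho; rewrite pow2_sqrt; nra).
  assert (HcR : rC < R) by nra.
  assert (Hc : 0 < c < 1).
  { unfold c; split. apply Rdiv_lt_0_compat; auto.
    apply Rmult_lt_reg_r with R; auto. unfold Rdiv. rewrite Rmult_assoc, Rinv_l, Rmult_1_r by lra. lra. }
  assert (Hs2 : (rho / R) ^ 2 = 1 - c ^ 2).
  { unfold c. replace ((rho / R) ^ 2) with (rho ^ 2 / R ^ 2) by (field; lra).
    replace ((rC / R) ^ 2) with (rC ^ 2 / R ^ 2) by (field; lra).
    rewrite Hrho2, HR2. field. nra. }
  assert (Hcos : cos (sphTheta rC x y) = c) by (unfold sphTheta; apply cos_acos; fold R c; lra).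
  assert (Hsin : sin (sphTheta rC x y) = rho / R).
  { unfold sphTheta; rewrite sin_acos by (fold R c; lra). fold R c.
    rewrite <- (sqrt_pow2 (rho / R)). f_equal. rewrite Hs2. unfold Rsqr. ring.
    apply Rlt_le, Rdiv_lt_0_compat; auto. }
  assert (Hth : 0 < sphTheta rC x y < PI).
  { pose proof (acos_bound (rC / sphR rC x y)) as B. fold R c in B. unfold sphTheta. fold R c.
    assert (0 < sin (acos c)) by (unfold sphTheta in Hsin; fold R c in Hsin; rewrite Hsin; apply Rdiv_lt_0_compat; auto).
    destruct B as [B1 B2]. split.
    - destruct B1 as [B1|B1]; auto. rewrite <- B1, sin_0 in H. lra.
    - destruct B2 as [B2|B2]; auto. rewrite B2, sin_PI in H. lra. }
  repeat split; auto; lra.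
Qed.

Lemma cs_kphi k x y : (x <> 0 \/ y <> 0) ->
  cos (INR k * azimuth x y) = fst (Tcs k x y) / sqrt (x ^ 2 + y ^ 2) ^ k /\
  sin (INR k * azimuth x y) = snd (Tcs k x y) / sqrt (x ^ 2 + y ^ 2) ^ k.
Proof.
  intros Hxy. destruct (azimuth_cs x y Hxy) as [C S].
  assert (Hr : 0 < sqrt (x ^ 2 + y ^ 2)) by (apply sqrt_lt_R0; destruct Hxy; nra).
  destruct (deMoivre k (azimuth x y)) as [D1 D2]. rewrite D1, D2, C, S.
  unfold Rdiv. rewrite !(Rmult_comm _ (/ sqrt (x ^ 2 + y ^ 2))).
  destruct (Tcs_hom k (/ sqrt (x ^ 2 + y ^ 2)) x y) as [H1 H2]. rewrite H1, H2.
  rewrite pow_inv. split; ring.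
Qed.

Definition Psi_pos rC l k x y :=
  / sphR rC x y ^ (l + 2) * Ynorm l (Z.of_nat k) * Kc l (Z.of_nat k) * / sphR rC x y ^ k *
  (- (INR l + 1 + INR k) * (rC / sphR rC x y) * Qf l (Z.of_nat k) (rC / sphR rC x y) +
   (1 - (rC / sphR rC x y) ^ 2) * Derive_n (Fleg l) (S (Z.to_nat (Z.of_nat l + Z.of_nat k))) (rC / sphR rC x y)).

Lemma Wpos rC l k x y : 0 < rC -> (1 <= k)%nat -> (x <> 0 \/ y <> 0) ->
  Wf rC l (Z.of_nat k) x y = Psi_pos rC l k x y * sqrt (x ^ 2 + y ^ 2) ^ k.
Proof.
  intros HrC Hk Hxy.
  destruct (geom rC x y HrC Hxy) as (HR & Hc & Hrho & Hcos & Hsin & Hth & Hs2).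
  unfold Wf, Psi_pos. rewrite deriv_pos by auto. rewrite Hcos, Hsin, assoc_eq.
  set (R := sphR rC x y) in *. set (c := rC / R) in *. set (rho := sqrt (x ^ 2 + y ^ 2)) in *.
  assert (Hsq : sqrt (1 - c ^ 2) = rho / R).
  { rewrite <- Hs2. apply sqrt_pow2. apply Rlt_le, Rdiv_lt_0_compat; auto. }
  rewrite Hsq, <- pow_powerRZ, <- Hs2.
  set (s := rho / R) in *.
  assert (Es : rho = s * R) by (unfold s; field; lra).
  assert (Hs : 0 < s) by (unfold s; apply Rdiv_lt_0_compat; auto).
  rewrite Es, Rpow_mult_distr.
  destruct k as [|k']. lia. simpl pred. rewrite S_INR.
  simpl pow.
  field. repeat split; try apply pow_nonzero; lra.
Qed.

Definition Psi_neg rC l k (H H2 : list R) x y :=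
  / sphR rC x y ^ (l + 2) * Ynorm l (- Z.of_nat k) * Kc l (- Z.of_nat k) * / (-1) ^ k * / sphR rC x y ^ k *
  / (1 + rC / sphR rC x y) ^ k *
  (- (INR l + 1 - INR k) * (rC / sphR rC x y) * peval H (rC / sphR rC x y) -
   (1 + rC / sphR rC x y) * peval H2 (rC / sphR rC x y)).

Lemma Wneg rC l k' H H2 x y : 0 < rC -> (S k' <= l)%nat -> (x <> 0 \/ y <> 0) ->
  (forall u, Derive_n (Fleg l) (l - S k') u = (u - 1) ^ S k' * peval H u) ->
  (forall u, Derive_n (Fleg l) (S (l - S k')) u = (u - 1) ^ k' * peval H2 u) ->
  Wf rC l (- Z.of_nat (S k')) x y = Psi_neg rC l (S k') H H2 x y * sqrt (x ^ 2 + y ^ 2) ^ (S k').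
Proof.
  intros HrC Hk Hxy HQ HQ'.
  destruct (geom rC x y HrC Hxy) as (HR & Hc & Hrho & Hcos & Hsin & Hth & Hs2).
  unfold Wf, Psi_neg. rewrite deriv_neg by auto. rewrite Hcos, Hsin, assoc_eq.
  assert (Ej : Z.to_nat (Z.of_nat l + - Z.of_nat (S k')) = (l - S k')%nat).
  { replace (Z.of_nat l + - Z.of_nat (S k'))%Z with (Z.of_nat (l - S k')) by lia. apply Nat2Z.id. }
  unfold Qf. rewrite Ej, HQ, HQ'.
  set (R := sphR rC x y) in *. set (c := rC / R) in *. set (rho := sqrt (x ^ 2 + y ^ 2)) in *.
  assert (Hsq : sqrt (1 - c ^ 2) = rho / R).
  { rewrite <- Hs2. apply sqrt_pow2. apply Rlt_le, Rdiv_lt_0_compat; auto. }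
  rewrite Hsq, powerRZ_neg', <- pow_powerRZ.
  set (s := rho / R) in *.
  assert (Es : rho = s * R) by (unfold s; field; lra).
  assert (Hs : 0 < s) by (unfold s; apply Rdiv_lt_0_compat; auto).
  rewrite Es, Rpow_mult_distr. simpl pred.
  set (A := / R ^ (l + 2)). set (N := Ynorm l (- Z.of_nat (S k'))). set (K := Kc l (- Z.of_nat (S k'))).
  set (h := peval H c). set (h2 := peval H2 c).
  assert (Esk : s ^ S k' = s * s ^ k') by reflexivity.
  assert (Eck : (c - 1) ^ S k' = (c - 1) * (c - 1) ^ k') by reflexivity.
  assert (Key : (s * s ^ k') ^ 2 = (-1) ^ S k' * ((c - 1) * (c - 1) ^ k') * (1 + c) ^ S k').
  { rewrite <- Esk, <- Eck, <- pow_mult, Nat.mul_comm, pow_mult, Hs2.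
    rewrite <- !Rpow_mult_distr. f_equal. ring. }
  rewrite Esk, Eck.
  set (sk' := s ^ k') in *. set (ck' := (c - 1) ^ k') in *. set (bk := (1 + c) ^ S k') in *.
  set (sg := (-1) ^ S k') in *. set (Rk := R ^ S k').
  assert (Hsk' : sk' <> 0) by (apply pow_nonzero; lra).
  assert (Hck' : ck' <> 0) by (apply pow_nonzero; lra).
  assert (Hbk : bk <> 0) by (apply pow_nonzero; lra).
  assert (Hsg : sg <> 0) by (apply pow_nonzero; lra).
  assert (HRk : Rk <> 0) by (apply pow_nonzero; lra).
  assert (HA : A <> 0) by (apply Rinv_neq_0_compat, pow_nonzero; lra).
  assert (Ibk : / bk = sg * ((c - 1) * ck') / (s * sk') ^ 2).
  { rewrite Key. field. repeat split; auto; lra. }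
  rewrite Ibk.
  transitivity (A * N * K / (s * sk') * (- (INR l + 1) * c * (c - 1) * ck' * h
      + INR (S k') * c * (c - 1) * ck' * h + s ^ 2 * ck' * h2)).
  { field. repeat split; auto; lra. }
  rewrite Hs2. field. repeat split; auto; lra.
Qed.

Lemma c2_pow (f : R -> R -> R) n x y : continuity_2d_pt f x y -> continuity_2d_pt (fun u v => f u v ^ n) x y.
Proof.
  intros H. induction n as [|n IH].
  - apply continuity_2d_pt_ext with (fun _ _ => 1). intros; reflexivity. apply continuity_2d_pt_const.
  - apply continuity_2d_pt_ext with (fun u v => f u v * f u v ^ n). intros; reflexivity.
    apply continuity_2d_pt_mult; auto.
Qed.

Lemma c2_comp (g : R -> R) (f : R -> R -> R) x y : (forall z, continuous g z) ->
  continuity_2d_pt f x y -> continuity_2d_pt (fun u v => g (f u v)) x y.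
Proof.
  intros Hg Hf. apply continuity_1d_2d_pt_comp; auto.
  apply continuity_pt_filterlim. apply Hg.
Qed.

Lemma sphR_pos rC x y : 0 < rC -> 0 < sphR rC x y.
Proof. intros; unfold sphR; apply sqrt_lt_R0; nra. Qed.

Lemma c2_sphR rC x y : 0 < rC -> continuity_2d_pt (fun u v => sphR rC u v) x y.
Proof.
  intros HrC. unfold sphR. apply continuity_1d_2d_pt_comp.
  apply continuity_pt_sqrt. nra.
  apply continuity_2d_pt_plus. apply continuity_2d_pt_plus.
  apply c2_pow, continuity_2d_pt_id1. apply c2_pow, continuity_2d_pt_id2.
  apply continuity_2d_pt_const.
Qed.

Lemma c2_c rC x y : 0 < rC -> continuity_2d_pt (fun u v => rC / sphR rC u v) x y.
Proof.
  intros HrC. apply continuity_2d_pt_mult. apply continuity_2d_pt_const.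
  apply continuity_2d_pt_inv. apply c2_sphR; auto. apply Rgt_not_eq, sphR_pos; auto.
Qed.

Lemma DnF_cont l j z : continuous (Derive_n (Fleg l) j) z.
Proof.
  destruct (DnF_poly l j) as [q Hq].
  apply (continuous_ext (peval q)). intros; rewrite Hq; auto. apply peval_cont.
Qed.

Ltac c2 := repeat match goal with
 | |- continuity_2d_pt (fun _ _ => ?c) _ _ => apply continuity_2d_pt_const
 | |- continuity_2d_pt (fun u v => @?a u v * @?b u v) _ _ => apply (continuity_2d_pt_mult a b)
 | |- continuity_2d_pt (fun u v => @?a u v + @?b u v) _ _ => apply (continuity_2d_pt_plus a b)
 | |- continuity_2d_pt (fun u v => @?a u v - @?b u v) _ _ => apply (continuity_2d_pt_minus a b)
 | |- continuity_2d_pt (fun u v => - @?a u v) _ _ => apply (continuity_2d_pt_opp a)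
 | |- continuity_2d_pt (fun u v => / @?a u v) _ _ => apply (continuity_2d_pt_inv a)
 | |- continuity_2d_pt (fun u v => @?a u v ^ ?n) _ _ => apply (c2_pow a n)
 | |- continuity_2d_pt (fun u v => sphR ?r u v) _ _ => apply c2_sphR
 | |- continuity_2d_pt (fun u v => Qf ?l ?m (@?g u v)) _ _ => apply (c2_comp (Qf l m) g); [intros; apply DnF_cont|]
 | |- continuity_2d_pt (fun u v => Derive_n ?F ?j (@?g u v)) _ _ => apply (c2_comp (Derive_n F j) g); [intros; apply DnF_cont|]
 | |- continuity_2d_pt (fun u v => peval ?H (@?g u v)) _ _ => apply (c2_comp (peval H) g); [intros; apply peval_cont|]
 end.

Lemma c2_Psi_pos rC l k x y : 0 < rC -> continuity_2d_pt (Psi_pos rC l k) x y.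
Proof.
  intros HrC. unfold Psi_pos.
  assert (Hp : forall n, sphR rC x y ^ n <> 0) by (intros; apply pow_nonzero, Rgt_not_eq, sphR_pos; auto).
  c2; auto; apply c2_c; auto.
Qed.

Lemma c2_Psi_neg rC l k H H2 x y : 0 < rC -> continuity_2d_pt (Psi_neg rC l k H H2) x y.
Proof.
  intros HrC. unfold Psi_neg.
  assert (Hp : forall n, sphR rC x y ^ n <> 0) by (intros; apply pow_nonzero, Rgt_not_eq, sphR_pos; auto).
  assert (Hc0 : 0 < rC / sphR rC x y) by (apply Rdiv_lt_0_compat; auto; apply sphR_pos; auto).
  c2; auto; try (apply c2_c; auto); apply pow_nonzero; lra.
Qed.

Lemma parts_pos rC l k x y : 0 < rC -> (1 <= k)%nat ->
  fst (integrand rC l (Z.of_nat k) x y) = Psi_pos rC l k x y * fst (Tcs k x y) /\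
  snd (integrand rC l (Z.of_nat k) x y) = Psi_pos rC l k x y * snd (Tcs k x y).
Proof.
  intros HrC Hk. destruct (integrand_parts rC l (Z.of_nat k) x y) as [E1 E2]. rewrite E1, E2.
  destruct (Req_dec x 0) as [Hx|Hx]; [destruct (Req_dec y 0) as [Hy|Hy]|].
  - subst. destruct (Tcs_00 k Hk) as [T1 T2]. rewrite T1, T2, Wf_0 by (auto; lia). split; ring.
  - assert (Hxy : x <> 0 \/ y <> 0) by auto.
    unfold sphPhi. rewrite <- INR_IZR_INZ. destruct (cs_kphi k x y Hxy) as [C S].
    rewrite C, S, Wpos by auto.
    assert (0 < sqrt (x ^ 2 + y ^ 2)) by (apply sqrt_lt_R0; nra).
    split; field; apply pow_nonzero; lra.
  - assert (Hxy : x <> 0 \/ y <> 0) by auto.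
    unfold sphPhi. rewrite <- INR_IZR_INZ. destruct (cs_kphi k x y Hxy) as [C S].
    rewrite C, S, Wpos by auto.
    assert (0 < sqrt (x ^ 2 + y ^ 2)) by (apply sqrt_lt_R0; nra).
    split; field; apply pow_nonzero; lra.
Qed.

Lemma parts_neg rC l k' H H2 x y : 0 < rC -> (S k' <= l)%nat ->
  (forall u, Derive_n (Fleg l) (l - S k') u = (u - 1) ^ S k' * peval H u) ->
  (forall u, Derive_n (Fleg l) (S (l - S k')) u = (u - 1) ^ k' * peval H2 u) ->
  fst (integrand rC l (- Z.of_nat (S k')) x y) = Psi_neg rC l (S k') H H2 x y * fst (Tcs (S k') x y) /\
  snd (integrand rC l (- Z.of_nat (S k')) x y) = - (Psi_neg rC l (S k') H H2 x y * snd (Tcs (S k') x y)).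
Proof.
  intros HrC Hk HQ HQ'. destruct (integrand_parts rC l (- Z.of_nat (S k')) x y) as [E1 E2]. rewrite E1, E2.
  assert (Gen : x <> 0 \/ y <> 0 ->
    Wf rC l (- Z.of_nat (S k')) x y * cos (IZR (- Z.of_nat (S k')) * sphPhi x y) =
      Psi_neg rC l (S k') H H2 x y * fst (Tcs (S k') x y) /\
    Wf rC l (- Z.of_nat (S k')) x y * sin (IZR (- Z.of_nat (S k')) * sphPhi x y) =
      - (Psi_neg rC l (S k') H H2 x y * snd (Tcs (S k') x y))).
  { intros Hxy. unfold sphPhi. rewrite opp_IZR, <- INR_IZR_INZ, Ropp_mult_distr_l_reverse, cos_neg, sin_neg.
    destruct (cs_kphi (S k') x y Hxy) as [C S].
    rewrite C, S, (Wneg rC l k' H H2) by auto.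
    assert (0 < sqrt (x ^ 2 + y ^ 2)) by (apply sqrt_lt_R0; destruct Hxy; nra).
    split; field; apply pow_nonzero; lra. }
  destruct (Req_dec x 0) as [Hx|Hx]; [destruct (Req_dec y 0) as [Hy|Hy]|]; try (apply Gen; auto; fail).
  subst. destruct (Tcs_00 (S k') ltac:(lia)) as [T1 T2]. rewrite T1, T2, Wf_0 by (auto; lia). split; ring.
Qed.

Lemma cont_parts rC l m x y : 0 < rC -> m <> 0%Z -> (- Z.of_nat l <= m <= Z.of_nat l)%Z ->
  continuity_2d_pt (fun u v => fst (integrand rC l m u v)) x y /\
  continuity_2d_pt (fun u v => snd (integrand rC l m u v)) x y.
Proof.
  intros HrC Hm Hml.
  destruct (Z_lt_le_dec 0 m) as [Hp|Hn].
  - assert (Em : m = Z.of_nat (Z.to_nat m)) by lia. set (k := Z.to_nat m) in *.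
    assert (Hk : (1 <= k)%nat) by lia. rewrite Em.
    destruct (Tcs_cont k x y) as [T1 T2].
    split.
    + apply continuity_2d_pt_ext with (fun u v => Psi_pos rC l k u v * fst (Tcs k u v)).
      intros; symmetry; apply parts_pos; auto.
      apply continuity_2d_pt_mult; auto. apply c2_Psi_pos; auto.
    + apply continuity_2d_pt_ext with (fun u v => Psi_pos rC l k u v * snd (Tcs k u v)).
      intros; symmetry; apply parts_pos; auto.
      apply continuity_2d_pt_mult; auto. apply c2_Psi_pos; auto.
  - assert (Em : m = (- Z.of_nat (S (Z.to_nat (- m) - 1)))%Z) by lia.
    set (k' := (Z.to_nat (- m) - 1)%nat) in *.
    assert (Hk : (S k' <= l)%nat) by lia. rewrite Em.
    destruct (DnF_fact l (l - S k')) as [H HH]. lia.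
    destruct (DnF_fact l (S (l - S k'))) as [H2 HH2]. lia.
    replace (l - (l - S k'))%nat with (S k') in HH by lia.
    replace (l - S (l - S k'))%nat with k' in HH2 by lia.
    destruct (Tcs_cont (S k') x y) as [T1 T2].
    split.
    + apply continuity_2d_pt_ext with (fun u v => Psi_neg rC l (S k') H H2 u v * fst (Tcs (S k') u v)).
      intros; symmetry; apply parts_neg; auto.
      apply continuity_2d_pt_mult; auto. apply c2_Psi_neg; auto.
    + apply continuity_2d_pt_ext with (fun u v => - (Psi_neg rC l (S k') H H2 u v * snd (Tcs (S k') u v))).
      intros; symmetry; apply parts_neg; auto.
      apply continuity_2d_pt_opp, continuity_2d_pt_mult; auto. apply c2_Psi_neg; auto.
Qed.
From Stdlib Require Import Reals ZArith Lra.
From Coquelicot Require Import Coquelicot.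
Open Scope R_scope.

Lemma cont_eps (g : R -> R) x0 :
  (forall eps, 0 < eps -> exists delta, 0 < delta /\
     forall u, Rabs (u - x0) < delta -> Rabs (g u - g x0) < eps) ->
  continuous g x0.
Proof.
  intros H. apply continuity_pt_filterlim.
  unfold continuity_pt, continue_in, limit1_in, limit_in. intros eps Heps.
  destruct (H eps Heps) as [dl [Hdl Hu]]. exists dl. split; auto.
  intros u [_ Hu']. simpl in *. unfold R_dist in *. apply Hu; auto.
Qed.

Lemma c2d_slice1 f x y : continuity_2d_pt f x y -> continuous (fun t => f t y) x.
Proof.
  intros H. apply cont_eps. intros eps Heps.
  destruct (H (mkposreal eps Heps)) as [dl Hd].
  exists dl. split. apply cond_pos. intros u Hu. apply Hd; auto.
  rewrite Rminus_diag, Rabs_R0. apply cond_pos.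
Qed.

Lemma c2d_swap f x y : continuity_2d_pt f x y -> continuity_2d_pt (fun u v => f v u) y x.
Proof.
  intros H eps. destruct (H eps) as [dl Hd]. exists dl. intros u v Hu Hv. apply Hd; auto.
Qed.

Lemma c2d_slice2 f x y : continuity_2d_pt f x y -> continuous (fun t => f x t) y.
Proof. intros H. apply (c2d_slice1 (fun u v => f v u)). apply c2d_swap; auto. Qed.

Lemma param_cont_le (f : R -> R -> R) a b x0 :
  (forall x y, continuity_2d_pt f x y) -> a <= b ->
  forall eps, 0 < eps -> exists delta, 0 < delta /\
     forall u, Rabs (u - x0) < delta ->
       Rabs (RInt (fun y => f u y) a b - RInt (fun y => f x0 y) a b) <= (b - a) * eps.
Proof.
  intros Hc Hab eps Heps.
  destruct (uniform_continuity_2d f (x0 - 1) (x0 + 1) a b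
     (fun x y _ _ => Hc x y) (mkposreal eps Heps)) as [dl Hd].
  exists (Rmin dl 1). split. apply Rmin_pos; [apply cond_pos|lra].
  intros u Hu.
  assert (Hu1 : Rabs (u - x0) < dl) by (eapply Rlt_le_trans; [apply Hu| apply Rmin_l]).
  assert (Hu2 : Rabs (u - x0) < 1) by (eapply Rlt_le_trans; [apply Hu| apply Rmin_r]).
  assert (Hex : forall x, ex_RInt (fun y => f x y) a b).
  { intros x. apply (ex_RInt_continuous (V := R_CompleteNormedModule)). intros z _. apply c2d_slice2, Hc. }
  assert (E : RInt (fun y => f u y) a b - RInt (fun y => f x0 y) a b =
              RInt (fun y => f u y - f x0 y) a b).
  { symmetry. apply (RInt_minus (V := R_CompleteNormedModule)); auto. }
  rewrite E. apply abs_RInt_le_const; auto.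
  apply (ex_RInt_minus (V := R_NormedModule)); auto.
  intros t Ht. left. apply Hd; try lra.
  apply Rabs_lt_between' in Hu2; lra. rewrite Rminus_diag, Rabs_R0. apply cond_pos.
Qed.

Lemma param_cont (f : R -> R -> R) a b x0 :
  (forall x y, continuity_2d_pt f x y) ->
  continuous (fun x => RInt (fun y => f x y) a b) x0.
Proof.
  intros Hc.
  assert (Hex : forall x a b, ex_RInt (fun y => f x y) a b).
  { intros x a' b'. apply (ex_RInt_continuous (V := R_CompleteNormedModule)). intros z _. apply c2d_slice2, Hc. }
  apply cont_eps. intros eps Heps.
  destruct (Rle_or_lt a b) as [Hab|Hab].
  - destruct (param_cont_le f a b x0 Hc Hab (eps / (b - a + 1))) as [dl [Hdl Hd]].
    apply Rdiv_lt_0_compat; lra.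
    exists dl; split; auto. intros u Hu. eapply Rle_lt_trans. apply Hd; auto.
    apply Rlt_le_trans with ((b - a + 1) * (eps / (b - a + 1))).
    apply Rmult_lt_compat_r. apply Rdiv_lt_0_compat; lra. lra.
    right. field. lra.
  - destruct (param_cont_le f b a x0 Hc (Rlt_le _ _ Hab) (eps / (a - b + 1))) as [dl [Hdl Hd]].
    apply Rdiv_lt_0_compat; lra.
    exists dl; split; auto. intros u Hu.
    rewrite <- (opp_RInt_swap (V := R_CompleteNormedModule) _ b a) by auto.
    rewrite <- (opp_RInt_swap (V := R_CompleteNormedModule) (fun y => f x0 y) b a) by auto.
    change (Rabs (- RInt (fun y => f u y) b a - - RInt (fun y => f x0 y) b a) < eps).
    replace (- RInt (fun y => f u y) b a - - RInt (fun y => f x0 y) b a) with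
      (- (RInt (fun y => f u y) b a - RInt (fun y => f x0 y) b a)) by ring.
    rewrite Rabs_Ropp.
    eapply Rle_lt_trans. apply Hd; auto.
    apply Rlt_le_trans with ((a - b + 1) * (eps / (a - b + 1))).
    apply Rmult_lt_compat_r. apply Rdiv_lt_0_compat; lra. lra.
    right. field. lra.
Qed.

Lemma fubini (f : R -> R -> R) a b c d :
  (forall x y, continuity_2d_pt f x y) ->
  RInt (fun x => RInt (fun y => f x y) a b) c d =
  RInt (fun y => RInt (fun x => f x y) c d) a b.
Proof.
  intros Hc.
  assert (Hcs : forall x y, continuity_2d_pt (fun u v => f v u) x y).
  { intros x y. apply c2d_swap, Hc. }
  assert (Hex1 : forall x a b, ex_RInt (fun y => f x y) a b).
  { intros x a' b'. apply (ex_RInt_continuous (V := R_CompleteNormedModule)). intros z _. apply c2d_slice2, Hc. }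
  assert (Hex2 : forall y a b, ex_RInt (fun x => f x y) a b).
  { intros y a' b'. apply (ex_RInt_continuous (V := R_CompleteNormedModule)). intros z _. apply c2d_slice1, Hc. }
  set (h := fun x => RInt (fun y => f x y) a b).
  assert (Hh : forall x, continuous h x) by (intros; apply param_cont; auto).
  assert (Hexh : forall c u, ex_RInt h c u).
  { intros c' u. apply (ex_RInt_continuous (V := R_CompleteNormedModule)). intros; auto. }
  set (A := fun u => RInt h c u).
  set (F := fun u y => RInt (fun x => f x y) c u).
  set (B := fun u => RInt (fun y => F u y) a b).
  assert (HF : forall u y, is_derive (fun z => F z y) u (f u y)).
  { intros u y. unfold F. apply (is_derive_RInt (V := R_NormedModule) (fun x => f x y) _ c).
    apply filter_forall. intros. apply (RInt_correct (V := R_CompleteNormedModule)); auto.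
    apply c2d_slice1, Hc. }
  assert (HDF : forall u y, Derive (fun z => F z y) u = f u y).
  { intros; apply is_derive_unique; auto. }
  assert (HA : forall u, is_derive A u (h u)).
  { intros u. apply (is_derive_RInt (V := R_NormedModule) h A c).
    apply filter_forall. intros. apply (RInt_correct (V := R_CompleteNormedModule)); auto. auto. }
  assert (HB : forall u, is_derive B u (h u)).
  { intros u. unfold B.
    assert (E : h u = RInt (fun t => Derive (fun z => F z t) u) a b).
    { unfold h. apply RInt_ext. intros; rewrite HDF; auto. }
    rewrite E. apply is_derive_RInt_param.
    - apply filter_forall. intros. eexists; apply HF.
    - intros t _. apply continuity_2d_pt_ext with f.
      intros; rewrite HDF; auto. apply Hc.
    - apply filter_forall. intros y. apply (ex_RInt_continuous (V := R_CompleteNormedModule)). intros z _.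
      unfold F. apply (param_cont (fun u v => f v u)). auto. }
  assert (HAB : forall u, is_derive (fun u => A u - B u) u 0).
  { intros u. replace 0 with (minus (h u) (h u)).
    apply (is_derive_minus (V := R_NormedModule)); auto.
    unfold minus, plus, opp; simpl. ring. }
  assert (H0 : A c - B c = 0).
  { unfold A, B, F. rewrite RInt_point.
    rewrite (RInt_ext (V := R_CompleteNormedModule) _ (fun _ => 0)).
    rewrite RInt_const. unfold scal, zero; simpl. unfold mult; simpl. ring.
    intros. rewrite RInt_point. reflexivity. }
  assert (Hd : A d - B d = 0).
  { destruct (Rtotal_order c d) as [Hcd|[Hcd|Hcd]].
    - rewrite <- H0. symmetry. apply (eq_is_derive (V := R_NormedModule) (fun u => A u - B u)); [intros t _; apply HAB | auto].
    - subst; auto.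
    - rewrite <- H0. apply (eq_is_derive (V := R_NormedModule) (fun u => A u - B u)); [intros t _; apply HAB | auto]. }
  apply Rminus_diag_uniq in Hd. exact Hd.
Qed.

Lemma rot_parts rC l m x y : 0 < rC -> m <> 0%Z ->
  fst (integrand rC l m (- y) x) =
    cos (IZR m * (PI / 2)) * fst (integrand rC l m x y) - sin (IZR m * (PI / 2)) * snd (integrand rC l m x y) /\
  snd (integrand rC l m (- y) x) =
    sin (IZR m * (PI / 2)) * fst (integrand rC l m x y) + cos (IZR m * (PI / 2)) * snd (integrand rC l m x y).
Proof.
  intros HrC Hm.
  destruct (integrand_parts rC l m x y) as [E1 E2].
  destruct (integrand_parts rC l m (- y) x) as [F1 F2].
  rewrite E1, E2, F1, F2, Wf_rot. unfold sphPhi.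
  destruct (Req_dec x 0) as [Hx|Hx]; [destruct (Req_dec y 0) as [Hy|Hy]|].
  - subst. rewrite Ropp_0, Wf_0 by auto. split; ring.
  - destruct (rot_angle m x y (or_intror Hy)) as [R1 R2]. rewrite R1, R2. split; ring.
  - destruct (rot_angle m x y (or_introl Hx)) as [R1 R2]. rewrite R1, R2. split; ring.
Qed.

Lemma RInt_C_pair (g : R -> C) a b :
  ex_RInt (fun t => fst (g t)) a b -> ex_RInt (fun t => snd (g t)) a b ->
  RInt (V := C_R_CompleteNormedModule) g a b = (RInt (fun t => fst (g t)) a b, RInt (fun t => snd (g t)) a b).
Proof.
  intros H1 H2. apply (is_RInt_unique (V := C_R_CompleteNormedModule)).
  assert (K := is_RInt_fct_extend_pair (U := R_NormedModule) (V := R_NormedModule) g a b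
     (RInt (fun t => fst (g t)) a b) (RInt (fun t => snd (g t)) a b)
     (RInt_correct (V := R_CompleteNormedModule) _ _ _ H1)
     (RInt_correct (V := R_CompleteNormedModule) _ _ _ H2)).
  exact K.
Qed.
Lemma RInt_refl (h : R -> R) d : (forall z, continuous h z) ->
  RInt (fun y => h (- y)) (- d) d = RInt h (- d) d.
Proof.
  intros Hh.
  assert (Hex : forall a b, ex_RInt h a b).
  { intros a b. apply (ex_RInt_continuous (V := R_CompleteNormedModule)). intros; auto. }
  assert (E : is_RInt (fun y => opp (h (- y))) (- d) d (RInt h d (- d))).
  { apply (is_RInt_comp_opp (V := R_NormedModule)). rewrite Ropp_involutive. apply (RInt_correct (V := R_CompleteNormedModule)); auto. }
  assert (Ex : ex_RInt (fun y => h (- y)) (- d) d).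
  { apply (ex_RInt_ext (fun y => opp (opp (h (- y))))). intros; apply opp_opp.
    apply (ex_RInt_comp_opp (V := R_NormedModule) (fun y => opp (h y))).
    apply (ex_RInt_continuous (V := R_CompleteNormedModule)). intros z _.
    apply (continuous_opp (K := R_AbsRing) (V := R_NormedModule) h). auto. }
  pose proof (is_RInt_unique (V := R_CompleteNormedModule) _ _ _ _ E) as E2. clear E. rename E2 into E.
  rewrite <- (opp_RInt_swap (V := R_CompleteNormedModule) h (- d) d) in E by apply Hex.
  rewrite (RInt_opp (V := R_CompleteNormedModule)) in E by auto.
  unfold opp in E; simpl in E. lra.
Qed.
Lemma RInt_lin2 (f g : R -> R) a b al be : ex_RInt f a b -> ex_RInt g a b ->
  RInt (fun t => al * f t + be * g t) a b = al * RInt f a b + be * RInt g a b.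
Proof.
  intros Hf Hg.
  assert (E := RInt_plus (V := R_CompleteNormedModule) (fun t => scal al (f t)) (fun t => scal be (g t)) a b
     (ex_RInt_scal (V := R_NormedModule) f a b al Hf) (ex_RInt_scal (V := R_NormedModule) g a b be Hg)).
  rewrite (RInt_scal (V := R_CompleteNormedModule) f) in E by auto.
  rewrite (RInt_scal (V := R_CompleteNormedModule) g) in E by auto.
  exact E.
Qed.

Theorem mainTheorem5 (d rC : R) (l : nat) (m : Z) :
  0 < d -> 0 < rC -> (1 <= l)%nat ->
  (- Z.of_nat l <= m <= Z.of_nat l)%Z ->
  ~ (4 | m)%Z ->
  v_lm d rC l m = RtoC 0.
Proof.
  intros Hd HrC Hl Hml H4.
  assert (Hm : m <> 0%Z). { intros ->. apply H4. exists 0%Z. lia. }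
  set (fr := fun u v => fst (integrand rC l m u v)).
  set (fi := fun u v => snd (integrand rC l m u v)).
  assert (Cr : forall x y, continuity_2d_pt fr x y) by (intros; apply cont_parts; auto).
  assert (Ci : forall x y, continuity_2d_pt fi x y) by (intros; apply cont_parts; auto).
  assert (Exr : forall x a b, ex_RInt (fun y => fr x y) a b).
  { intros x a b. apply (ex_RInt_continuous (V := R_CompleteNormedModule)). intros z _. apply c2d_slice2, Cr. }
  assert (Exi : forall x a b, ex_RInt (fun y => fi x y) a b).
  { intros x a b. apply (ex_RInt_continuous (V := R_CompleteNormedModule)). intros z _. apply c2d_slice2, Ci. }
  assert (Exr2 : forall a b, ex_RInt (fun x => RInt (fun y => fr x y) (- d) d) a b).
  { intros a b. apply (ex_RInt_continuous (V := R_CompleteNormedModule)). intros z _. apply param_cont; auto. }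
  assert (Exi2 : forall a b, ex_RInt (fun x => RInt (fun y => fi x y) (- d) d) a b).
  { intros a b. apply (ex_RInt_continuous (V := R_CompleteNormedModule)). intros z _. apply param_cont; auto. }
  assert (Ev : v_lm d rC l m = (RInt (fun x => RInt (fun y => fr x y) (- d) d) (- d) d,
                               RInt (fun x => RInt (fun y => fi x y) (- d) d) (- d) d)).
  { unfold v_lm.
    rewrite (RInt_ext (V := C_R_CompleteNormedModule) _
      (fun x => (RInt (fun y => fr x y) (- d) d, RInt (fun y => fi x y) (- d) d))).
    - apply (RInt_C_pair (fun x => (RInt (fun y => fr x y) (- d) d, RInt (fun y => fi x y) (- d) d))); [apply Exr2 | apply Exi2].
    - intros x _. apply (RInt_C_pair (fun y => integrand rC l m x y)); [apply Exr | apply Exi]. }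
  rewrite Ev.
  set (J1 := RInt (fun x => RInt (fun y => fr x y) (- d) d) (- d) d).
  set (J2 := RInt (fun x => RInt (fun y => fi x y) (- d) d) (- d) d).
  set (cA := cos (IZR m * (PI / 2))). set (sA := sin (IZR m * (PI / 2))).
  assert (Inv : forall f : R -> R -> R, (forall x y, continuity_2d_pt f x y) ->
     RInt (fun x => RInt (fun y => f (- y) x) (- d) d) (- d) d =
     RInt (fun x => RInt (fun y => f x y) (- d) d) (- d) d).
  { intros f Cf.
    rewrite (RInt_ext (V := R_CompleteNormedModule) _ (fun x => RInt (fun y => f y x) (- d) d)).
    - apply (fubini (fun x y => f y x)). intros; apply c2d_swap; auto.
    - intros x _. apply (RInt_refl (fun y => f y x)). intros z. apply c2d_slice1, Cf. }
  assert (Lin : forall al be : R,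
     RInt (fun x => RInt (fun y => al * fr x y + be * fi x y) (- d) d) (- d) d = al * J1 + be * J2).
  { intros al be.
    rewrite (RInt_ext (V := R_CompleteNormedModule) _
      (fun x => al * RInt (fun y => fr x y) (- d) d + be * RInt (fun y => fi x y) (- d) d)).
    - apply RInt_lin2; auto.
    - intros x _. apply RInt_lin2; auto. }
  assert (E1 : J1 = cA * J1 + (- sA) * J2).
  { rewrite <- Lin. unfold J1 at 1. rewrite <- (Inv fr Cr).
    apply RInt_ext. intros x _. apply RInt_ext. intros y _.
    unfold fr at 1. destruct (rot_parts rC l m x y HrC Hm) as [R1 R2]. rewrite R1. unfold fr, fi, cA, sA. cbv beta. simpl. lra. }
  assert (E2 : J2 = sA * J1 + cA * J2).
  { rewrite <- Lin. unfold J2 at 1. rewrite <- (Inv fi Ci).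
    apply RInt_ext. intros x _. apply RInt_ext. intros y _.
    unfold fi at 1. destruct (rot_parts rC l m x y HrC Hm) as [R1 R2]. rewrite R2. unfold fr, fi, cA, sA. cbv beta. simpl. lra. }
  assert (Hc1 : cA <> 1) by (apply cosA_ne1; auto).
  assert (Hcs : sA ^ 2 + cA ^ 2 = 1) by (unfold sA, cA; rewrite <- (sin2_cos2 (IZR m * (PI / 2))); unfold Rsqr; ring).
  assert (Hnz : (1 - cA) ^ 2 + sA ^ 2 <> 0) by (intros H; apply Hc1; nra).
  assert (Z1 : J1 = 0).
  { apply Rmult_eq_reg_l with ((1 - cA) ^ 2 + sA ^ 2); auto.
    replace (((1 - cA) ^ 2 + sA ^ 2) * J1) with
      ((1 - cA) * ((1 - cA) * J1 + sA * J2) - sA * (- sA * J1 + (1 - cA) * J2)) by ring.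
    replace ((1 - cA) * J1 + sA * J2) with 0 by lra.
    replace (- sA * J1 + (1 - cA) * J2) with 0 by lra. ring. }
  assert (Z2 : J2 = 0).
  { apply Rmult_eq_reg_l with ((1 - cA) ^ 2 + sA ^ 2); auto.
    replace (((1 - cA) ^ 2 + sA ^ 2) * J2) with
      (sA * ((1 - cA) * J1 + sA * J2) + (1 - cA) * (- sA * J1 + (1 - cA) * J2)) by ring.
    replace ((1 - cA) * J1 + sA * J2) with 0 by lra.
    replace (- sA * J1 + (1 - cA) * J2) with 0 by lra. ring. }
  rewrite Z1, Z2. reflexivity.
Qed.
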